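(* Let $S_1,S_2\in\mathbb S^{d\times d}$ and let $\Sigma_1,\Sigma_2$ be symmetric $d\times d$ matrices with $0\prec\sigma_{i,d}I_d\preceq\Sigma_i\preceq\sigma_{i,1}I_d$ for $i=1,2$. Then $$\langle\Sigma_1(S_1-S_2)\Sigma_2,S_1-S_2\rangle\ \ge\ \frac{\sigma_{1,1}\sigma_{2,1}\sigma_{1,d}\sigma_{2,d}}{\sigma_{1,1}\sigma_{2,1}+\sigma_{1,d}\sigma_{2,d}}\|S_1-S_2\|_F^2+\frac{\|\Sigma_1(S_1-S_2)\Sigma_2+\Sigma_2(S_1-S_2)\Sigma_1\|_F^2}{4(\sigma_{1,1}\sigma_{2,1}+\sigma_{1,d}\sigma_{2,d})}.$$
   Context: $\mathbb S^{d\times d}$ is the set of symmetric $d\times d$ matrices, $\langle A,B\rangle=\mathrm{tr}(A^{\mathrm T}B)$, $\|\cdot\|_F$ the Frobenius norm, and $A\preceq B$ means $B-A$ is positive semidefinite. *)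

(* Defs.v *)
From HB Require Import structures.
From mathcomp Require Import all_boot all_order all_algebra.
Set Implicit Arguments. Unset Strict Implicit. Unset Printing Implicit Defensive.
Import Order.TTheory GRing.Theory Num.Theory.
Local Open Scope ring_scope.

Definition is_sym_mx (R : pzRingType) (d : nat) (A : 'M[R]_d) : Prop := A^T = A.

Definition psd (R : realFieldType) (d : nat) (A : 'M[R]_d) : Prop :=
  is_sym_mx A /\ forall x : 'cV[R]_d, 0 <= (x^T *m A *m x) 0 0.

Definition loewner_le (R : realFieldType) (d : nat) (A B : 'M[R]_d) : Prop :=
  psd (B - A).

Definition frob_inner (R : pzRingType) (d : nat) (A B : 'M[R]_d) : R := \tr (A^T *m B).

Definition frob_norm2 (R : pzRingType) (d : nat) (A : 'M[R]_d) : R := frob_inner A A.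

(* Main.v *)
Require Import Defs.
From HB Require Import structures.
From mathcomp Require Import all_boot all_order all_algebra.
Import Order.TTheory GRing.Theory Num.Theory.
Local Open Scope ring_scope.

From mathcomp Require Import ring lra zify.

Set Implicit Arguments. Unset Strict Implicit. Unset Printing Implicit Defensive.

Definition bf (R : realFieldType) (d : nat) (P : 'M[R]_d) (x y : 'cV[R]_d) : R :=
  (x^T *m P *m y) 0 0.

Lemma bfDl (R : realFieldType) d (P : 'M[R]_d) (x y z : 'cV[R]_d) : bf P (x + y) z = bf P x z + bf P y z.
Proof. by rewrite /bf linearD /= !mulmxDl mxE. Qed.
Lemma bfDr (R : realFieldType) d (P : 'M[R]_d) (x y z : 'cV[R]_d) : bf P z (x + y) = bf P z x + bf P z y.
Proof. by rewrite /bf !mulmxDr mxE. Qed.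
Lemma bfZl (R : realFieldType) d (P : 'M[R]_d) t (x z : 'cV[R]_d) : bf P (t *: x) z = t * bf P x z.
Proof. by rewrite /bf linearZ /= -!scalemxAl mxE. Qed.
Lemma bfZr (R : realFieldType) d (P : 'M[R]_d) t (x z : 'cV[R]_d) : bf P z (t *: x) = t * bf P z x.
Proof. by rewrite /bf -!scalemxAr mxE. Qed.
Lemma bfDm (R : realFieldType) d (P Q : 'M[R]_d) (x z : 'cV[R]_d) : bf (P + Q) x z = bf P x z + bf Q x z.
Proof. by rewrite /bf mulmxDr mulmxDl mxE. Qed.
Lemma bfNm (R : realFieldType) d (P : 'M[R]_d) (x z : 'cV[R]_d) : bf (- P) x z = - bf P x z.
Proof. by rewrite /bf mulmxN mulNmx mxE. Qed.
Lemma bfZm (R : realFieldType) d (P : 'M[R]_d) t (x z : 'cV[R]_d) : bf (t *: P) x z = t * bf P x z.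
Proof. by rewrite /bf -scalemxAr -scalemxAl mxE. Qed.
Lemma bf_sym (R : realFieldType) d (P : 'M[R]_d) (x y : 'cV[R]_d) : is_sym_mx P -> bf P x y = bf P y x.
Proof.
move=> sP; rewrite /bf -[in LHS](trmxK (x^T *m P *m y)) mxE.
by rewrite !trmx_mul trmxK sP mulmxA.
Qed.
Lemma bf_delta (R : realFieldType) d (P : 'M[R]_d) i j :
  bf P (delta_mx i 0) (delta_mx j 0) = P i j.
Proof.
rewrite /bf trmx_delta -rowE -colE.
by rewrite !mxE.
Qed.
Lemma bf_cong (R : realFieldType) d (P Q : 'M[R]_d) (x y : 'cV[R]_d) : bf (Q^T *m P *m Q) x y = bf P (Q *m x) (Q *m y).
Proof. by rewrite /bf trmx_mul !mulmxA. Qed.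

Lemma tr11 (R : realFieldType) (A : 'M[R]_1) : \tr A = A 0 0.
Proof. by rewrite /mxtrace big_ord1. Qed.

Lemma tr_rank1 (R : realFieldType) d (K : 'M[R]_d) (p : 'cV[R]_d) :
  \tr (K *m (p *m p^T)) = bf K p p.
Proof. by rewrite mulmxA mxtrace_mulC tr11 /bf mulmxA. Qed.

Lemma bf_rank1 (R : realFieldType) d (p x : 'cV[R]_d) :
  bf (p *m p^T) x x = (bf 1%:M p x) ^+ 2.
Proof.
rewrite /bf mulmx1.
have -> : x^T *m (p *m p^T) *m x = (x^T *m p) *m (p^T *m x) by rewrite !mulmxA.
rewrite mxE big_ord1 expr2; congr (_ * _).
by rewrite -[in LHS](trmxK (x^T *m p)) mxE trmx_mul trmxK.
Qed.


Lemma symE (R : realFieldType) d (H : 'M[R]_d) i j : is_sym_mx H -> H i j = H j i.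
Proof. by move=> sH; rewrite -{1}sH mxE. Qed.

Lemma psd_diag (R : realFieldType) d (H : 'M[R]_d) i : psd H -> 0 <= H i i.
Proof. by move=> [_ hp]; have := hp (delta_mx i 0); rewrite -/(bf _ _ _) bf_delta. Qed.

Lemma bf_expand (R : realFieldType) d (H : 'M[R]_d) (x y : 'cV[R]_d) t :
  is_sym_mx H ->
  bf H (x + t *: y) (x + t *: y) = bf H x x + 2 * t * bf H x y + t ^+ 2 * bf H y y.
Proof.
move=> sH; rewrite !bfDl !bfDr !bfZl !bfZr (bf_sym x y sH); ring.
Qed.

Lemma psd_row0 (R : realFieldType) d (H : 'M[R]_d) i j : psd H -> H i i = 0 -> H i j = 0.
Proof.
move=> [sH hp] h0.
have key : forall t : R, 0 <= H j j + 2 * t * H i j.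
  move=> t; have := hp (delta_mx j 0 + t *: delta_mx i 0).
  rewrite -/(bf _ _ _) bf_expand // !bf_delta h0 (symE _ _ sH).
  by rewrite mulr0 addr0.
apply/eqP; apply/negP => /negP hne.
have := key (- (H j j + 1) / (2 * H i j)).
have -> : H j j + 2 * (- (H j j + 1) / (2 * H i j)) * H i j = -1.
  by field.
by move=> h; lra.
Qed.

Lemma psd_rank1_sub (R : realFieldType) d (H : 'M[R]_d) (k : 'I_d) :
  psd H -> 0 < H k k ->
  psd (H - (H k k)^-1 *: (col k H *m (col k H)^T)).
Proof.
move=> [sH hp] cpos; set c := H k k; set p := col k H.
split.
  by rewrite /is_sym_mx linearB /= linearZ /= trmx_mul trmxK sH.
move=> x; rewrite -/(bf _ _ _) bfDm bfNm bfZm bf_rank1.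
have hp1 : bf 1%:M p x = bf H (delta_mx k 0) x.
  by rewrite /bf /p colE trmx_mul sH mulmx1.
rewrite hp1; set s := bf H (delta_mx k 0) x.
have := hp (x + (- s / c) *: delta_mx k 0).
rewrite -/(bf _ _ _) bf_expand // bf_delta (bf_sym _ _ sH) -/s -/c.
have -> : bf H x x + 2 * (- s / c) * s + (- s / c) ^+ 2 * c = bf H x x - c^-1 * s ^+ 2.
  by field; rewrite gt_eqF.
done.
Qed.

Lemma trace_psd (R : realFieldType) d (K H : 'M[R]_d) :
  psd K -> psd H -> 0 <= \tr (K *m H).
Proof.
move=> pK.
suff main : forall n (H : 'M[R]_d), psd H ->
  (forall i j : 'I_d, ((i < d - n)%N || (j < d - n)%N) -> H i j = 0) -> 0 <= \tr (K *m H).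
  by move=> pH; apply: (main d) => // i j; rewrite subnn.
elim=> [|n IH] {}H pH hz.
  have -> : H = 0.
    by apply/matrixP => i j; rewrite mxE; apply: hz; rewrite subn0 ltn_ord.
  by rewrite mulmx0 mxtrace0.
have [hdn|hnd] := leqP d n.
  apply: IH => // i j hij; apply: hz.
  have -> : (d - n.+1 = d - n)%N by lia.
  done.
have hk : (d - n.+1 < d)%N by lia.
set kk : 'I_d := Ordinal hk.
have hkk : (d - n = kk.+1)%N by rewrite /= ; lia.
have hsplit : forall i : 'I_d, (i < d - n)%N -> (i < d - n.+1)%N \/ i = kk.
  move=> i; rewrite hkk ltnS leq_eqVlt => /orP [/eqP e|l]; last by left.
  by right; apply: val_inj.
have [sH _] := pH.
have c0 := psd_diag kk pH.
move: c0; rewrite le_eqVlt => /orP [/eqP c0 | cpos].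
  apply: IH => // i j /orP [/hsplit [l|->] | /hsplit [l|->]].
  - by apply: hz; rewrite l.
  - by apply: psd_row0.
  - by apply: hz; rewrite l orbT.
  - by rewrite symE //; apply: psd_row0.
set c := H kk kk; set p := col kk H.
have eH : H = (H - c^-1 *: (p *m p^T)) + c^-1 *: (p *m p^T) by rewrite subrK.
rewrite eH mulmxDr mxtraceD -scalemxAr mxtraceZ tr_rank1.
apply: addr_ge0; last first.
  by apply: mulr_ge0; [rewrite invr_ge0 ltW | case: pK => _ ->].
apply: IH; first exact: psd_rank1_sub.
move=> i j hij; rewrite !mxE big_ord1 !mxE.
case/orP: hij => /hsplit [l|->].
- by rewrite (hz i j) ?l // (hz i kk) ?l // mul0r mulr0 subr0.
- rewrite -/c (symE j kk sH); field; by rewrite gt_eqF.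
- by rewrite (hz i j) ?l ?orbT // (hz j kk) ?l // mulr0 mulr0 subr0.
- rewrite -/c; field; by rewrite gt_eqF.
Qed.


Lemma psdE (R : realFieldType) d (P : 'M[R]_d) :
  psd P <-> is_sym_mx P /\ forall x, 0 <= bf P x x.
Proof. by []. Qed.

Lemma psd_add (R : realFieldType) d (P Q : 'M[R]_d) : psd P -> psd Q -> psd (P + Q).
Proof.
move=> [sP hP] [sQ hQ]; split; first by rewrite /is_sym_mx linearD /= sP sQ.
by move=> x; rewrite -/(bf _ _ _) bfDm addr_ge0 //; [apply: hP | apply: hQ].
Qed.

Lemma psd_scale (R : realFieldType) d (P : 'M[R]_d) t : 0 <= t -> psd P -> psd (t *: P).
Proof.
move=> t0 [sP hP]; split; first by rewrite /is_sym_mx linearZ /= sP.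
by move=> x; rewrite -/(bf _ _ _) bfZm mulr_ge0 //; apply: hP.
Qed.

Lemma psd_cong (R : realFieldType) d (P Q : 'M[R]_d) : psd P -> psd (Q^T *m P *m Q).
Proof.
move=> [sP hP]; split; first by rewrite /is_sym_mx !trmx_mul trmxK sP mulmxA.
by move=> x; rewrite -/(bf _ _ _) bf_cong; apply: hP.
Qed.

Lemma psd1 (R : realFieldType) d : psd (1%:M : 'M[R]_d).
Proof.
split; first by rewrite /is_sym_mx trmx1.
move=> x; rewrite mulmx1 mxE; apply: sumr_ge0 => i _; rewrite mxE.
by rewrite -expr2 sqr_ge0.
Qed.

Lemma psd0 (R : realFieldType) d : psd (0 : 'M[R]_d).
Proof. by split; [rewrite /is_sym_mx trmx0 | move=> x; rewrite mulmx0 mul0mx mxE]. Qed.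

Lemma psd_sq (R : realFieldType) d (Q : 'M[R]_d) : psd (Q^T *m Q).
Proof. by have := psd_cong Q (psd1 R d); rewrite mulmx1. Qed.

Lemma psd_antisym (R : realFieldType) d (P : 'M[R]_d) : psd P -> psd (- P) -> P = 0.
Proof.
move=> [sP hP] [_ hN].
have q0 : forall x, bf P x x = 0.
  move=> x; apply/eqP; rewrite eq_le; apply/andP; split; last exact: hP.
  by have := hN x; rewrite -/(bf _ _ _) bfNm oppr_ge0.
apply/matrixP => i j; rewrite mxE -bf_delta.
have := bf_expand (delta_mx i 0) (delta_mx j 0) 1 sP.
rewrite scale1r !q0 => /eqP; rewrite eq_sym; lra.
Qed.

Lemma comm_c (R : realFieldType) d (P : 'M[R]_d) c :
  (c%:M - P) *m P = P *m (c%:M - P).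
Proof. by rewrite mulmxBl mulmxBr mul_scalar_mx mul_mx_scalar. Qed.

Lemma psd_Pc (R : realFieldType) d (P : 'M[R]_d) c :
  0 <= c -> psd P -> psd (c%:M - P) -> psd (P *m (c%:M - P)).
Proof.
move=> c0 pP pQ; move: c0; rewrite le_eqVlt => /orP [/eqP c0|cpos].
  have e : (0%:M : 'M[R]_d) = 0 by apply/matrixP => i j; rewrite !mxE mul0rn.
  move: pQ; rewrite -c0 e sub0r => pN.
  by rewrite (psd_antisym pP pN) mul0mx; apply: psd0.
have sP := pP.1; have sQ := pQ.1.
have -> : P *m (c%:M - P) =
   c^-1 *: ((c%:M - P)^T *m P *m (c%:M - P) + P^T *m (c%:M - P) *m P).
  rewrite sP sQ comm_c -mulmxDr subrK mul_mx_scalar scalerA mulVf ?scale1r //.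
  by rewrite gt_eqF.
apply: psd_scale; first by rewrite invr_ge0 ltW.
by apply: psd_add; apply: psd_cong.
Qed.


Definition Tf (R : realFieldType) d (X G H : 'M[R]_d) : R := \tr (X^T *m G *m X *m H).

Lemma TfDl (R : realFieldType) d (X G1 G2 H : 'M[R]_d) : Tf X (G1 + G2) H = Tf X G1 H + Tf X G2 H.
Proof. by rewrite /Tf mulmxDr mulmxDl mulmxDl mxtraceD. Qed.
Lemma TfNl (R : realFieldType) d (X G H : 'M[R]_d) : Tf X (- G) H = - Tf X G H.
Proof. by rewrite /Tf mulmxN !mulNmx linearN. Qed.
Lemma TfZl (R : realFieldType) d (X G H : 'M[R]_d) t : Tf X (t *: G) H = t * Tf X G H.
Proof. by rewrite /Tf -scalemxAr -!scalemxAl mxtraceZ. Qed.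
Lemma TfDr (R : realFieldType) d (X G H1 H2 : 'M[R]_d) : Tf X G (H1 + H2) = Tf X G H1 + Tf X G H2.
Proof. by rewrite /Tf mulmxDr mxtraceD. Qed.
Lemma TfNr (R : realFieldType) d (X G H : 'M[R]_d) : Tf X G (- H) = - Tf X G H.
Proof. by rewrite /Tf mulmxN linearN. Qed.
Lemma TfZr (R : realFieldType) d (X G H : 'M[R]_d) t : Tf X G (t *: H) = t * Tf X G H.
Proof. by rewrite /Tf -scalemxAr mxtraceZ. Qed.
Lemma Tf_psd (R : realFieldType) d (X G H : 'M[R]_d) : psd G -> psd H -> 0 <= Tf X G H.
Proof. by move=> pG pH; apply: trace_psd => //; exact: psd_cong. Qed.

Lemma expand2 (R : realFieldType) d (A : 'M[R]_d) a c :
  (A - a%:M) *m (c%:M - A) = (c + a) *: A - A *m A - (a * c) *: 1%:M.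
Proof.
rewrite mulmxBl !mulmxBr !mul_mx_scalar !mul_scalar_mx.
apply/matrixP => i j; rewrite !mxE.
by case: (i == j) => /=; ring.
Qed.

Lemma expand1 (R : realFieldType) d (A : 'M[R]_d) a :
  (A - a%:M) *m A = A *m A - a *: A.
Proof. by rewrite mulmxBl mul_scalar_mx. Qed.

Lemma expand3 (R : realFieldType) d (A : 'M[R]_d) c :
  A *m (c%:M - A) = c *: A - A *m A.
Proof. by rewrite mulmxBr mul_mx_scalar. Qed.

Lemma scal1 (R : realFieldType) d (c : R) : (c%:M : 'M[R]_d) = c *: 1%:M.
Proof. by rewrite scalemx1. Qed.


Lemma F_ident (R : realFieldType) d (X A B : 'M[R]_d) a al b be :
  be * Tf X ((A - a%:M) *m (al%:M - A)) B
  + Tf X ((A - a%:M) *m A) (B *m (be%:M - B))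
  + a * be * Tf X (al%:M - A) (B - b%:M)
  + a * Tf X A ((B - b%:M) *m (be%:M - B))
  = (a * b + al * be) * Tf X A B - a * b * al * be * Tf X 1%:M 1%:M
    - Tf X (A *m A) (B *m B).
Proof.
rewrite !expand2 expand1 expand3 (scal1 _ al) (scal1 _ b).
rewrite !(TfDl, TfNl, TfZl, TfDr, TfNr, TfZr).
ring.
Qed.

Lemma sym_norm (R : realFieldType) d (Y : 'M[R]_d) :
  frob_norm2 (Y + Y^T) <= 4 * \tr (Y^T *m Y).
Proof.
have h0 : 0 <= \tr ((Y - Y^T)^T *m (Y - Y^T)).
  by rewrite -[X in \tr X]mul1mx; apply: trace_psd; [apply: psd1 | apply: psd_sq].
move: h0; rewrite /frob_norm2 /frob_inner.
have t1 : (Y + Y^T)^T = Y^T + Y by apply/matrixP => i j; rewrite !mxE addrC.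
have t2 : (Y - Y^T)^T = - Y + Y^T by apply/matrixP => i j; rewrite !mxE addrC.
rewrite t1 t2 !mulmxDl !mulmxDr !mulNmx !mulmxN !mxtraceD !raddfN /=.
rewrite (mxtrace_mulC Y Y^T).
lra.
Qed.

Lemma F1 (R : realFieldType) d (X A B : 'M[R]_d) :
  is_sym_mx X -> is_sym_mx A -> is_sym_mx B ->
  frob_inner (A *m X *m B) X = Tf X A B.
Proof.
move=> sX sA sB; rewrite /frob_inner /Tf !trmx_mul sX sA sB.
by rewrite mxtrace_mulC !mulmxA [LHS]mxtrace_mulC !mulmxA [LHS]mxtrace_mulC !mulmxA.
Qed.

Lemma F3 (R : realFieldType) d (X A B : 'M[R]_d) :
  is_sym_mx X -> is_sym_mx A -> is_sym_mx B ->
  \tr ((A *m X *m B)^T *m (A *m X *m B)) = Tf X (A *m A) (B *m B).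
Proof.
move=> sX sA sB; rewrite /Tf !trmx_mul sX sA sB !mulmxA.
rewrite [LHS]mxtrace_mulC !mulmxA.
by have := mxtrace_mulC (B *m B) (X *m A *m A *m X); rewrite !mulmxA.
Qed.


Unset Implicit Arguments. Set Strict Implicit.

Theorem lemmaE (R : realFieldType) (d : nat)
  (S1 S2 Sig1 Sig2 : 'M[R]_d) (s11 s1d s21 s2d : R) :
  is_sym_mx S1 -> is_sym_mx S2 ->
  is_sym_mx Sig1 -> is_sym_mx Sig2 ->
  0 < s1d -> 0 < s2d ->
  loewner_le (s1d%:M) Sig1 -> loewner_le Sig1 (s11%:M) ->
  loewner_le (s2d%:M) Sig2 -> loewner_le Sig2 (s21%:M) ->
  frob_inner (Sig1 *m (S1 - S2) *m Sig2) (S1 - S2) >=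
    (s11 * s21 * s1d * s2d) / (s11 * s21 + s1d * s2d) * frob_norm2 (S1 - S2)
    + frob_norm2 (Sig1 *m (S1 - S2) *m Sig2 + Sig2 *m (S1 - S2) *m Sig1)
      / (4 * (s11 * s21 + s1d * s2d)).
Proof.
move=> sS1 sS2 sA sB ha hb l1 l2 l3 l4.
have [d0|dpos] := posnP d.
  subst d; rewrite /frob_norm2 /frob_inner /mxtrace !big_ord0 mulr0 mul0r addr0.
  by [].
set X := S1 - S2.
have sX : is_sym_mx X by rewrite /is_sym_mx /X; apply/matrixP => i j; rewrite !mxE (symE _ _ sS1) (symE _ _ sS2).
set i0 : 'I_d := Ordinal dpos.
have gap : forall (M : 'M[R]_d) (lo hi : R), psd (M - lo%:M) -> psd (hi%:M - M) -> lo <= hi.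
  move=> M lo hi p1 p2; have := psd_diag i0 (psd_add p2 p1).
  by rewrite addrA subrK !mxE eqxx !mulr1n subr_ge0.
have hal := gap _ _ _ l1 l2.
have hbe := gap _ _ _ l3 l4.
have posM : forall (M : 'M[R]_d) (lo : R), 0 < lo -> psd (M - lo%:M) -> psd M.
  move=> M lo hlo p1; have := psd_add p1 (psd_scale (ltW hlo) (psd1 R d)).
  by rewrite scalemx1 subrK.
have pA := posM _ _ ha l1.
have pB := posM _ _ hb l3.
have mid : forall (M : 'M[R]_d) (lo hi : R), psd (M - lo%:M) -> psd (hi%:M - M) -> lo <= hi ->
    psd ((M - lo%:M) *m (hi%:M - M)).
  move=> M lo hi p1 p2 hlh.
  have e : (hi - lo)%:M - (M - lo%:M) = hi%:M - M.
    by apply/matrixP => i j; rewrite !mxE; case: (i == j) => /=; ring.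
  have h0 : 0 <= hi - lo by rewrite subr_ge0.
  by have := psd_Pc h0 p1; rewrite e; apply.
have pG1 := mid _ _ _ l1 l2 hal.
have pUV := mid _ _ _ l3 l4 hbe.
have pPA : psd ((Sig1 - s1d%:M) *m Sig1).
  have e : (Sig1 - s1d%:M) *m Sig1 = (Sig1 - s1d%:M)^T *m (Sig1 - s1d%:M) + s1d *: (Sig1 - s1d%:M).
    by rewrite l1.1 mulmxBr mul_mx_scalar subrK.
  by rewrite e; apply: psd_add; [apply: psd_sq | apply: psd_scale; [apply: ltW|]].
have pBV : psd (Sig2 *m (s21%:M - Sig2)).
  by apply: psd_Pc => //; lra.
have hF : 0 <= (s1d * s2d + s11 * s21) * Tf X Sig1 Sig2
     - s1d * s2d * s11 * s21 * Tf X 1%:M 1%:M - Tf X (Sig1 *m Sig1) (Sig2 *m Sig2).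
  rewrite -F_ident.
  have h1 := Tf_psd X pG1 pB.
  have h2 := Tf_psd X pPA pBV.
  have h3 := Tf_psd X l2 l3.
  have h4 := Tf_psd X pA pUV.
  have e1 : 0 <= s21 by lra.
  have e2 : 0 <= s1d * s21 by apply: mulr_ge0; lra.
  apply: addr_ge0; [apply: addr_ge0; [apply: addr_ge0|]|].
  - by apply: mulr_ge0.
  - done.
  - by apply: mulr_ge0.
  - by apply: mulr_ge0; [lra|].
rewrite F1 //.
have n0E : frob_norm2 X = Tf X 1%:M 1%:M by rewrite /Tf !mulmx1.
have eY : (Sig1 *m X *m Sig2)^T = Sig2 *m X *m Sig1 by rewrite !trmx_mul sA sB sX mulmxA.
rewrite -eY n0E.
have hN := sym_norm (Sig1 *m X *m Sig2).
rewrite F3 // in hN.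
move: hN hF.
set tau := Tf X Sig1 Sig2; set n0 := Tf X 1%:M 1%:M; set t2 := Tf X (Sig1 *m Sig1) (Sig2 *m Sig2).
set N := frob_norm2 _.
move=> hN hF.
have Dpos : 0 < s11 * s21 + s1d * s2d.
  apply: ltr_wpDl; last by apply: mulr_gt0.
  by apply: mulr_ge0; lra.
have -> : s11 * s21 * s1d * s2d / (s11 * s21 + s1d * s2d) * n0 +
  N / (4 * (s11 * s21 + s1d * s2d)) = (s11 * s21 * s1d * s2d * n0 + N / 4) / (s11 * s21 + s1d * s2d).
  by field; rewrite gt_eqF.
rewrite ler_pdivrMr //.
lra.
Qed.
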